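(* There is a function $h:\mathbb{N}^2\to\mathbb{N}$ such that for any $k,t\in\mathbb{N}$ the following holds: if $G$ is a graph that does not contain a half-graph of order $t$ as a semi-induced subgraph, and $u$ and $v$ are vertices in the same connected component of the $k$-near-twin graph $NT_k(G)$, then $u$ and $v$ are $h(k,t)$-near-twins in $G$.
   Context: $N^G(v)$ denotes the set of neighbors of $v$ in $G$. Two vertices $u,v$ are $k$-near-twins in $G$ if $|N^G(u)\,\Delta\,N^G(v)|\le k$. The $k$-near-twin graph $NT_k(G)$ has vertex set $V(G)$, with $u,v$ adjacent iff they are $k$-near-twins in $G$. $G$ contains a half-graph of order $t$ as a semi-induced subgraph if there are distinct vertices $u_1,\dots,u_t,w_1,\dots,w_t$ of $G$ such that $u_iw_j\in E(G)$ iff $i\le j$ (edges among the $u_i$'s and among the $w_j$'s are arbitrary). *)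

(* Defs.v *)
From mathcomp Require Import all_boot.
Set Implicit Arguments. Unset Strict Implicit. Unset Printing Implicit Defensive.

Definition simple_graph (T : finType) (e : rel T) : Prop :=
  symmetric e /\ irreflexive e.

Definition nbhd (T : finType) (e : rel T) (v : T) : {set T} := [set w | e v w].

Definition symdiff (T : finType) (A B : {set T}) : {set T} := (A :\: B) :|: (B :\: A).

Definition near_twins (T : finType) (e : rel T) (k : nat) (u v : T) : bool :=
  #|symdiff (nbhd e u) (nbhd e v)| <= k.

Definition NT (T : finType) (e : rel T) (k : nat) : rel T :=
  fun u v => (u != v) && near_twins e k u v.

Definition has_semi_induced_half_graph (T : finType) (e : rel T) (t : nat) : Prop :=
  exists (us ws : 'I_t -> T),
    [/\ injective us, injective ws,
        (forall i j, us i != ws j) &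
        (forall i j : 'I_t, e (us i) (ws j) = (i <= j))].

(* Main.v *)
Require Import Defs.
From mathcomp Require Import all_boot.
From mathcomp Require Import zify.
Set Implicit Arguments. Unset Strict Implicit.

Section Aux.
Variables (T : finType) (e : rel T) (k : nat).

Fixpoint hh t := if t is t'.+1 then hh t' * t' + hh t' + k + 1 else 0.

Hypothesis esym : symmetric e.
Hypothesis eirr : irreflexive e.

Definition hgN t (a b : nat -> T) :=
  (forall i j, i < t -> j < t -> a j != b i) /\
  (forall i j, i < t -> j < t -> e (a j) (b i) = (i <= j)).

Lemma adj_neq x y : e x y -> x != y.
Proof. by move=> H; apply/eqP => E; subst; rewrite eirr in H. Qed.

Lemma cardU_le (A B : {set T}) : #|A :|: B| <= #|A| + #|B|.
Proof. have := cardsUI A B; lia. Qed.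

Lemma hgN_conv t a b : hgN t a b -> has_semi_induced_half_graph e t.
Proof.
case=> hne hadj.
exists (fun i : 'I_t => b i), (fun j : 'I_t => a j); split.
- move=> i1 i2 E; apply/val_inj => /=.
  have h1 := hadj i1 i1 (ltn_ord i1) (ltn_ord i1).
  have h2 := hadj i2 i2 (ltn_ord i2) (ltn_ord i2).
  have h3 := hadj i2 i1 (ltn_ord i2) (ltn_ord i1).
  have h4 := hadj i1 i2 (ltn_ord i1) (ltn_ord i2).
  rewrite E leqnn in h1; rewrite -E leqnn in h2.
  rewrite h1 in h3; rewrite h2 in h4.
  apply/eqP; rewrite eqn_leq -h3 -h4 //.
- move=> j1 j2 /= E; apply/val_inj => /=.
  have h1 := hadj j1 j1 (ltn_ord j1) (ltn_ord j1).
  have h2 := hadj j2 j2 (ltn_ord j2) (ltn_ord j2).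
  have h3 := hadj j1 j2 (ltn_ord j1) (ltn_ord j2).
  have h4 := hadj j2 j1 (ltn_ord j2) (ltn_ord j1).
  rewrite leqnn in h1; rewrite leqnn in h2.
  rewrite -E h1 in h3; rewrite E h2 in h4.
  apply/eqP; rewrite eqn_leq -h3 -h4 //.
- by move=> i j; rewrite eq_sym; apply: hne.
- by move=> i j; rewrite esym; apply: hadj.
Qed.

Fixpoint bad (X : {set T}) (b : nat -> T) n : {set T} :=
  if n is n'.+1 then bad X b n' :|: (X :\: nbhd e (b n')) else set0.

Lemma bad_card (X : {set T}) (b : nat -> T) c n :
  (forall i, i < n -> #|X :\: nbhd e (b i)| <= c) -> #|bad X b n| <= n * c.
Proof.
elim: n => [|n IH] H /=; first by rewrite cards0.
have H1 := IH (fun i hi => H i (ltnW hi)).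
have H2 := H n (ltnSn n).
have := cardU_le (bad X b n) (X :\: nbhd e (b n)); lia.
Qed.

Lemma bad_mem (X : {set T}) (b : nat -> T) n (x : T) :
  x \in X -> x \notin bad X b n -> forall i, i < n -> e (b i) x.
Proof.
elim: n => [|n IH] xX /= xB i hi //.
rewrite in_setU negb_or in xB; case/andP: xB => xB1 xB2.
have [lt|eq] : i < n \/ i = n by lia.
- exact: IH.
- subst i; move: xB2; rewrite !inE xX andbT negbK.
  by [].
Qed.

Lemma keyQ (w : nat -> T) t : forall (X : {set T}) p,
  X \subset nbhd e (w 0) ->
  (forall i, i < p -> near_twins e k (w i) (w i.+1)) ->
  hh t <= #|X :\: nbhd e (w p)| ->
  exists a b, [/\ hgN t a b,
    (forall i, i < t -> exists2 q, q < p.+1 & b i = w q) &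
    (forall j, j < t -> a j \in X)].
Proof.
elim: t => [|t IH] X p sub nt hz.
  by exists (fun _ => w 0), (fun _ => w 0); split.
set N := (hh t).+1.
have exP : exists q, N <= #|X :\: nbhd e (w q)|.
  by exists p; move: hz => /=; rewrite /N; lia.
case: (ex_minnP exP) => p' Pp' minp'.
have p'p : p' <= p.
  apply: minp'; move: hz => /=; rewrite /N; lia.
have z0 : #|X :\: nbhd e (w 0)| = 0.
  by apply/eqP; rewrite cards_eq0 setD_eq0.
destruct p' as [|q]; first by rewrite z0 in Pp'.
have zlt : forall q', q' < q.+1 -> #|X :\: nbhd e (w q')| < N.
  move=> q' hq'; rewrite ltnNge; apply/negP => H.
  have := minp' q' H; lia.
have ntq := nt q p'p.
have zub : #|X :\: nbhd e (w q.+1)| <= hh t + k.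
  have sub2 : X :\: nbhd e (w q.+1) \subset
      (X :\: nbhd e (w q)) :|: symdiff (nbhd e (w q)) (nbhd e (w q.+1)).
    apply/subsetP => x; rewrite /symdiff !inE.
    case: (e (w q) x); case: (e (w q.+1) x); case: (x \in X) => //.
  have := subset_leq_card sub2.
  have := cardU_le (X :\: nbhd e (w q)) (symdiff (nbhd e (w q)) (nbhd e (w q.+1))).
  have := zlt q (ltnSn q).
  move: ntq; rewrite /near_twins /N; lia.
set Z := (X :\: nbhd e (w q.+1)) :\ w q.+1.
have ZX : Z \subset X.
  apply/subsetP => x; rewrite !inE; by case/andP => _ /andP[].
have hZ : hh t <= #|Z :\: nbhd e (w q.+1)|.
  have : #|Z| <= #|Z :\: nbhd e (w q.+1)|.
    apply: subset_leq_card; apply/subsetP => x.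
    rewrite /Z !inE => /andP[-> /andP[-> ->]] //.
  have := cardsD1 (w q.+1) (X :\: nbhd e (w q.+1)).
  rewrite -/Z; move: Pp'; rewrite /N.
  case: (w q.+1 \in _) => /=; lia.
have [a [b [[hne hadj] bpath ainZ]]] :=
  IH Z q.+1 (subset_trans ZX sub) (fun i hi => nt i (leq_trans hi p'p)) hZ.
have ainZ' : forall j, j < t -> (a j != w q.+1) && ~~ e (w q.+1) (a j) && (a j \in X).
  move=> j hj; have := ainZ j hj; rewrite /Z !inE; by case/andP=> -> /andP[-> ->].
have bq : forall i, i < t -> #|X :\: nbhd e (b i)| <= hh t.
  move=> i hi; case: (bpath i hi) => q' hq' Eb; rewrite Eb.
  have [lt|eq] : q' < q.+1 \/ q' = q.+1 by lia.
  - have := zlt q' lt; rewrite /N; lia.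
  - subst q'; have := hadj i i hi hi; rewrite leqnn Eb esym.
    by case/andP: (ainZ' i hi) => /andP[_ /negbTE ->].
set O := X :&: nbhd e (w q.+1).
set B := bad X b t.
have hB := @bad_card X b (hh t) t bq.
have hO : 0 < #|O :\: B|.
  have := cardsID B O.
  have := subset_leq_card (subsetIr O B).
  have := cardsID (nbhd e (w q.+1)) X.
  have := subset_leq_card (subsetDl X (nbhd e (w p))).
  move: hz hB zub => /=; rewrite -/B -/O [t * _]mulnC; lia.
case/card_gt0P: hO => x0; rewrite in_setD => /andP[x0B x0O].
have x0X : x0 \in X by move: x0O; rewrite /O inE => /andP[].
have x0N : e (w q.+1) x0 by move: x0O; rewrite /O !inE => /andP[].
have x0b := @bad_mem X b t x0 x0X x0B.
exists (fun j => if j < t then a j else x0),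
       (fun i => if i < t then b i else w q.+1); split.
- split.
  + move=> i j hi hj.
    have [it|it] : i < t \/ i = t by lia.
    { have [jt|jt] : j < t \/ j = t by lia.
      { by rewrite it jt; apply: hne. }
      subst j; rewrite it ltnn eq_sym; apply: adj_neq; exact: x0b. }
    have [jt|jt] : j < t \/ j = t by lia.
    { subst i; rewrite jt ltnn; by case/andP: (ainZ' j jt) => /andP[]. }
    subst; rewrite ltnn eq_sym; exact: adj_neq.
  + move=> i j hi hj.
    have [it|it] : i < t \/ i = t by lia.
    { have [jt|jt] : j < t \/ j = t by lia.
      { by rewrite it jt; apply: hadj. }
      subst j; rewrite it ltnn esym (x0b i it); symmetry; lia. }
    have [jt|jt] : j < t \/ j = t by lia.
    { subst i; rewrite jt ltnn esym.
      case/andP: (ainZ' j jt) => /andP[_ /negbTE ->] _; symmetry; lia. }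
    subst; rewrite ltnn esym x0N leqnn //.
- move=> i hi; have [it|it] : i < t \/ i = t by lia.
  + rewrite it; case: (bpath i it) => q' hq' ->; exists q' => //; lia.
  + subst; rewrite ltnn; exists q.+1 => //; lia.
- move=> j hj; have [jt|jt] : j < t \/ j = t by lia.
  + rewrite jt; by case/andP: (ainZ' j jt).
  + by subst; rewrite ltnn.
Qed.

Lemma one_side t u v :
  ~ has_semi_induced_half_graph e t ->
  connect (NT e k) u v -> #|nbhd e u :\: nbhd e v| < hh t.
Proof.
move=> nohg /connectP [s pth lst].
set w := fun i => nth u (u :: s) i.
rewrite ltnNge; apply/negP => H.
have sub : nbhd e u :\: nbhd e v \subset nbhd e (w 0) by apply: subsetDl.
have nt : forall i, i < size s -> near_twins e k (w i) (w i.+1).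
  move=> i hi; have := (pathP u pth) i hi; rewrite /NT => /andP[_ ->] //.
have hz : hh t <= #|(nbhd e u :\: nbhd e v) :\: nbhd e (w (size s))|.
  have -> : w (size s) = v by rewrite lst (last_nth u).
  apply: (leq_trans H); apply: subset_leq_card; apply/subsetP => x.
  rewrite !inE; by case/andP => -> ->.
have [a [b [hg _ _]]] := @keyQ w t _ _ sub nt hz.
by apply: nohg; apply: (hgN_conv hg).
Qed.

End Aux.

Theorem lemma4p5 :
  exists h : nat -> nat -> nat,
    forall (k t : nat) (T : finType) (e : rel T),
      simple_graph e ->
      ~ has_semi_induced_half_graph e t ->
      forall u v : T,
        connect (NT e k) u v ->
        near_twins e (h k t) u v.
Proof.
exists (fun k t => hh k t + hh k t).
move=> k t T e [esym eirr] nohg u v conn.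
have NTsym : symmetric (NT e k).
  move=> x y; rewrite /NT eq_sym /near_twins /symdiff setUC //.
have conn' : connect (NT e k) v u by rewrite (sym_connect_sym NTsym).
have h1 := one_side esym eirr nohg conn.
have h2 := one_side esym eirr nohg conn'.
rewrite /near_twins /symdiff.
have := cardU_le (nbhd e u :\: nbhd e v) (nbhd e v :\: nbhd e u); lia.
Qed.
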